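(* The size of the smallest string attractor of the length-$n$ prefix $\mathbf{vtm}[0..n-1]$ of the ternary word $\mathbf{vtm}$ is $$\begin{cases}1,& n=1;\\ 2,& n=2;\\ 3,& 3\le n\le 6;\\ 4,& n\ge 7.\end{cases}$$
   Context: The word $\mathbf{vtm}=210201\cdots$ is the infinite fixed point, starting with $2$, of the morphism $2\mapsto 210$, $1\mapsto 20$, $0\mapsto 1$; it is indexed starting at $0$. A string attractor of a finite word $w=w[0..n-1]$ is a set $S\subseteq\{0,\ldots,n-1\}$ such that every nonempty factor $f$ of $w$ has an occurrence $w[p..q]=f$ with $p\le i\le q$ for some $i\in S$. *)

(* Defs.v *)
From mathcomp Require Import all_boot.
Set Implicit Arguments. Unset Strict Implicit. Unset Printing Implicit Defensive.

Definition vtm_morph (a : nat) : seq nat :=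
  match a with
  | 2 => [:: 2; 1; 0]
  | 1 => [:: 2; 0]
  | _ => [:: 1]
  end.

Definition vtm_apply (w : seq nat) : seq nat := flatten (map vtm_morph w).

(* phi^k(2); each is a prefix of the next, and its length is >= k+1. *)
Definition vtm_iter (k : nat) : seq nat := iter k vtm_apply [:: 2].

(* vtm[i], indexed from 0: the i-th letter of phi^(i)(2), whose length exceeds i. *)
Definition vtm (i : nat) : nat := nth 0 (vtm_iter i) i.

Definition vtm_prefix (n : nat) : seq nat := mkseq vtm n.

Definition factor (w : seq nat) (p q : nat) : seq nat := take (q - p).+1 (drop p w).

Definition string_attractor (w : seq nat) (S : {set 'I_(size w)}) : Prop :=
  forall i j : nat, i <= j < size w ->
    exists p q : nat, [/\ p <= q < size w,
      factor w p q = factor w i j &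
      exists2 s : 'I_(size w), s \in S & p <= s <= q].

Definition smallest_attractor_size (w : seq nat) (k : nat) : Prop :=
  (exists S : {set 'I_(size w)}, string_attractor S /\ #|S| = k) /\
  (forall S : {set 'I_(size w)}, string_attractor S -> k <= #|S|).

(* Main.v *)
Require Import Defs.
From mathcomp Require Import all_boot zify.
From Stdlib Require Import NArith.
Set Implicit Arguments. Unset Strict Implicit.

Fixpoint tmp (p : positive) : bool :=
  match p with xH => true | xO q => tmp q | xI q => ~~ tmp q end.
Definition tm (n : nat) : bool :=
  match N.of_nat n with N0 => false | Npos p => tmp p end.

Lemma tm_double n : tm n.*2 = tm n.
Proof.
have -> : n.*2 = (2 * n)%coq_nat by rewrite -muln2 mulnC.
rewrite /tm Nat2N.inj_double; by case: (N.of_nat n).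
Qed.

Lemma tm_doubleS n : tm n.*2.+1 = ~~ tm n.
Proof.
have -> : n.*2.+1 = ((2 * n)%coq_nat).+1 by rewrite -muln2 mulnC.
rewrite /tm Nat2N.inj_succ_double; by case: (N.of_nat n).
Qed.

Lemma tm_split m x : tm (m.*2 + x) = xorb (tm (m + x %/ 2)) (odd x).
Proof.
have E : m.*2 + x = (m + x %/ 2).*2 + odd x.
  by rewrite -modn2; have := divn_eq x 2; lia.
rewrite E; case: (odd x) => /=; first by rewrite addn1 tm_doubleS; case: tm.
by rewrite addn0 tm_double; case: tm.
Qed.

Definition fv (a b : bool) : nat :=
  if a then (if b then 1 else 0) else (if b then 2 else 1).
Definition v (i : nat) : nat := fv (tm i) (tm i.+1).

Lemma phi_mk N : vtm_apply (mkseq v N) = mkseq v (N.*2 + tm N).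
Proof.
elim: N => [|N IH]; first by [].
rewrite /vtm_apply mkseqS map_rcons flatten_rcons -/(vtm_apply _) IH.
rewrite /mkseq.
have F0 : tm N.*2 = tm N by rewrite tm_double.
have F1 : tm N.*2.+1 = ~~ tm N by rewrite tm_doubleS.
have F2 : tm N.*2.+2 = tm N.+1 by rewrite -doubleS tm_double.
have F3 : tm N.*2.+3 = ~~ tm N.+1 by rewrite -doubleS tm_doubleS.
have H2 : (N.+1).*2 = N.*2 + 2 by rewrite doubleS; lia.
rewrite H2 /v.
move: F0 F1 F2 F3.
case E1: (tm N); case E2: (tm N.+1) => F0 F1 F2 F3 /=.
- have -> : N.*2 + 2 + 1 = (N.*2 + 1) + 2 by lia.
  rewrite [in RHS]iotaD map_cat; congr (_ ++ _).
  rewrite /= ?addnS ?addn0 ?add0n ?addn1 ?addn2 ?addn3; by rewrite ?F0 ?F1 ?F2 ?F3.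
- have -> : N.*2 + 2 + 0 = (N.*2 + 1) + 1 by lia.
  rewrite [in RHS]iotaD map_cat; congr (_ ++ _).
  rewrite /= ?addnS ?addn0 ?add0n ?addn1 ?addn2 ?addn3; by rewrite ?F0 ?F1 ?F2 ?F3.
- have -> : N.*2 + 2 + 1 = (N.*2 + 0) + 3 by lia.
  rewrite [in RHS]iotaD map_cat; congr (_ ++ _).
  rewrite /= ?addnS ?addn0 ?add0n ?addn1 ?addn2 ?addn3; by rewrite ?F0 ?F1 ?F2 ?F3.
- have -> : N.*2 + 2 + 0 = (N.*2 + 0) + 2 by lia.
  rewrite [in RHS]iotaD map_cat; congr (_ ++ _).
  rewrite /= ?addnS ?addn0 ?add0n ?addn1 ?addn2 ?addn3; by rewrite ?F0 ?F1 ?F2 ?F3.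
Qed.

Lemma iter_mk k : exists M, k < M /\ vtm_iter k = mkseq v M.
Proof.
elim: k => [|k [M [HM IH]]]; first by exists 1.
exists (M.*2 + tm M); split; first by lia.
by rewrite /vtm_iter iterS -/(vtm_iter k) IH phi_mk.
Qed.

Lemma vtm_v i : vtm i = v i.
Proof.
have [M [HM E]] := iter_mk i.
by rewrite /vtm E nth_mkseq.
Qed.

Lemma vtm_prefix_v n : vtm_prefix n = mkseq v n.
Proof. by apply: eq_mkseq => i; rewrite vtm_v. Qed.

Lemma factor_mkseq (f : nat -> nat) n p q : p <= q -> q < n ->
  factor (mkseq f n) p q = mkseq (fun d => f (p + d)) (q - p).+1.
Proof.
move=> Hp Hq; rewrite /factor /mkseq -map_drop -map_take drop_iota take_iota.
rewrite add0n (minn_idPl _); last by lia.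
by rewrite -{1}(addn0 p) iotaDl -map_comp.
Qed.

Lemma size_factor (w : seq nat) p q : p <= q -> q < size w ->
  size (factor w p q) = (q - p).+1.
Proof. move=> H1 H2; rewrite /factor size_take size_drop; case: ifP; lia. Qed.

Definition InvP (N : nat) (S : seq nat) : Prop :=
  forall i l, 2 <= l -> i + l <= N.+1 ->
  exists p s, [/\ s \in S, p + l <= N.+1, p <= s, s + 2 <= p + l &
                  forall d, d < l -> tm (p + d) = tm (i + d)].

Definition invb (N : nat) (S : seq nat) : bool :=
  all (fun i => all (fun l =>
    has (fun p => has (fun s => (p <= s) && (s + 2 <= p + l)) S &&
                  all (fun d => tm (p + d) == tm (i + d)) (iota 0 l))
        (iota 0 (N.+2 - l)))
      (iota 2 (N - i))) (iota 0 N).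

Lemma invbP N S : invb N S -> InvP N S.
Proof.
move=> /allP H i l Hl Hil.
have Hi : i \in iota 0 N by rewrite mem_iota; lia.
move: (H i Hi) => /allP H2.
have Hl2 : l \in iota 2 (N - i) by rewrite mem_iota; lia.
move: (H2 l Hl2) => /hasP [p]; rewrite mem_iota => Hp /andP [/hasP [s Hs /andP [H3 H4]] /allP H5].
exists p, s; split => //; first by lia.
by move=> d Hd; apply/eqP/H5; rewrite mem_iota; lia.
Qed.

Definition dbl1 (s : nat) := s.*2.+1.

Lemma step_range a b S : 6 <= a ->
  (forall N, a <= N <= b -> InvP N S) ->
  forall N, a.*2.+1 <= N <= b.*2.+1 -> InvP N (map dbl1 S).
Proof.
move=> Ha IH N HN i l Hl Hil.
case: (ltnP 2 l) => Hl3.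
-
  set e := (i + l).-1.
  set N' := (N - e %% 2) %/ 2.
  set i' := i %/ 2.
  set l' := (e %/ 2 - i').+1.
  have HN' : a <= N' <= b by rewrite /N'; lia.
  have [p' [s' [Hs' H1 H2 H3 H4]]] := IH N' HN' i' l' ltac:(rewrite /l' /i' /e; lia)
     ltac:(rewrite /l' /i' /e /N'; lia).
  exists (p'.*2 + i %% 2), (dbl1 s'); split.
  + by apply: map_f.
  + rewrite /N' /l' /i' /e in H1 H2 H3 *; lia.
  + rewrite /dbl1; lia.
  + rewrite /dbl1 /N' /l' /i' /e in H1 H2 H3 *; lia.
  + move=> d Hd.
    have Ei : i + d = i'.*2 + (i %% 2 + d) by rewrite /i'; have := divn_eq i 2; lia.
    rewrite Ei -addnA !tm_split H4 //.
    rewrite /l' /i' /e; lia.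
-
  have El : l = 2 by lia.
  subst l.
  have [j0 [Hj0 [T0 T1]]] : exists j0, j0 <= 5 /\ tm j0 = ~~ tm i /\ tm j0.+1 = tm i.+1.
    by case: (tm i); case: (tm i.+1); [exists 0 | exists 5 | exists 1 | exists 2].
  have HN' : a <= N %/ 2 <= b by lia.
  have [p [s' [Hs' H1 H2 H3 H4]]] := IH (N %/ 2) HN' j0 2 (leqnn 2) ltac:(lia).
  have Ep : p = s' by lia.
  subst p.
  exists (dbl1 s'), (dbl1 s'); split.
  + by apply: map_f.
  + rewrite /dbl1; lia.
  + by [].
  + by [].
  + move=> d Hd; rewrite /dbl1.
    case: d Hd => [|[|d]] Hd //.
    * have := H4 0 isT; rewrite !addn0 => E.
      by rewrite tm_doubleS E T0; case: tm.
    * have := H4 1 (ltnSn 1); rewrite !addn1 => E.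
      by rewrite -doubleS tm_double E T1.
Qed.

Lemma iter_dbl1 k x : iter k dbl1 x = 2 ^ k * x.+1 - 1.
Proof.
elim: k => [|k IH]; first by rewrite expn0 mul1n subn1.
rewrite iterS IH /dbl1 expnS -mulnA.
have : 0 < 2 ^ k * x.+1 by rewrite muln_gt0 expn_gt0.
lia.
Qed.

Lemma levels k a b S : 6 <= a ->
  (forall N, a <= N <= b -> InvP N S) ->
  forall N, iter k dbl1 a <= N <= iter k dbl1 b -> InvP N (iter k (map dbl1) S).
Proof.
move=> Ha H; elim: k => [|k IH] //=.
apply: step_range => //.
rewrite iter_dbl1.
have : 0 < 2 ^ k by rewrite expn_gt0.
move=> H2; have : 2 ^ k * a.+1 >= a.+1 by rewrite leq_pmull.
lia.
Qed.

Lemma decomp m : 13 <= m -> exists k c, [/\ 13 <= c < 26, 2 ^ k * c <= m & m < 2 ^ k * c.+1].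
Proof.
elim/ltn_ind: m => m IH Hm.
case: (ltnP m 26) => H.
  by exists 0, m; rewrite expn0 !mul1n; split => //; apply/andP.
have [k [c [Hc H1 H2]]] := IH (m %/ 2) ltac:(lia) ltac:(lia).
exists k.+1, c; rewrite expnS -!mulnA; split => //; lia.
Qed.

Lemma base_ok (a b : nat) S : all (fun N => invb N S) (iota a (b.+1 - a)) ->
  forall N, a <= N <= b -> InvP N S.
Proof.
move=> /allP H N HN; apply: invbP; apply: H; rewrite mem_iota; lia.
Qed.

Lemma size_iter k (S : seq nat) : size (iter k (map dbl1) S) = size S.
Proof. by elim: k => //= k IH; rewrite size_map. Qed.

Lemma upper_big N : 12 <= N -> exists S, size S = 4 /\ InvP N S.
Proof.
move=> HN.
have [k [c [Hc H1 H2]]] := decomp (m := N.+1) ltac:(lia).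
have P : 0 < 2 ^ k by rewrite expn_gt0.
case: (ltnP c 20) => C1.
  exists (iter k (map dbl1) [:: 3; 5; 7; 11]); split.
    by rewrite size_iter.
  apply: (@levels k 12 19) => //.
    by apply: base_ok; vm_compute.
  rewrite !iter_dbl1.
  have : 2 ^ k * 13 <= 2 ^ k * c by rewrite leq_mul2l; lia.
  have : 2 ^ k * c.+1 <= 2 ^ k * 20 by rewrite leq_mul2l; lia.
  lia.
case: (ltnP c 24) => C2.
  exists (iter k (map dbl1) [:: 5; 7; 11; 15]); split.
    by rewrite size_iter.
  apply: (@levels k 17 23) => //.
    by apply: base_ok; vm_compute.
  rewrite !iter_dbl1.
  have : 2 ^ k * 18 <= 2 ^ k * c by rewrite leq_mul2l; lia.
  have : 2 ^ k * c.+1 <= 2 ^ k * 24 by rewrite leq_mul2l; lia.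
  lia.
exists (iter k (map dbl1) [:: 5; 7; 15; 19]); split.
  by rewrite size_iter.
apply: (@levels k 23 25) => //.
  by apply: base_ok; vm_compute.
rewrite !iter_dbl1.
have : 2 ^ k * 24 <= 2 ^ k * c by rewrite leq_mul2l; lia.
have : 2 ^ k * c.+1 <= 2 ^ k * 26 by rewrite leq_mul2l; lia.
lia.
Qed.

Lemma card_le n (l : seq nat) : #|[set x : 'I_n | val x \in l]| <= size l.
Proof.
rewrite cardE -(size_map val).
apply: uniq_leq_size; first by rewrite map_inj_uniq ?enum_uniq //; exact: val_inj.
by move=> y /mapP [x]; rewrite mem_enum inE => H ->.
Qed.

Lemma inv_att N S : InvP N S ->
  string_attractor [set x : 'I_(size (vtm_prefix N)) | val x \in S].
Proof.
move=> H i j Hij.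
have Hsz : size (vtm_prefix N) = N by rewrite size_mkseq.
have [p [s [Hs H1 H2 H3 H4]]] := H i (j - i + 2) ltac:(lia) ltac:(lia).
exists p, (p + (j - i)); split.
- rewrite Hsz; lia.
- rewrite vtm_prefix_v !factor_mkseq; try lia.
  have -> : (p + (j - i) - p) = (j - i) by lia.
  rewrite /mkseq; apply/eq_in_map => d; rewrite mem_iota => Hd.
  rewrite /v -!addnS !H4 //; lia.
- have Hs' : s < size (vtm_prefix N) by rewrite Hsz; lia.
  exists (Ordinal Hs'); first by rewrite inE.
  simpl; lia.
Qed.

Definition attb (w : seq nat) (l : seq nat) : bool :=
  all (fun i => all (fun j =>
    has (fun p => (factor w p (p + (j - i)) == factor w i j) &&
                  has (fun s => (p <= s) && (s <= p + (j - i))) l)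
        (iota 0 (size w - (j - i))))
      (iota i (size w - i))) (iota 0 (size w)).

Lemma attb_att (w : seq nat) l : attb w l ->
  string_attractor [set x : 'I_(size w) | val x \in l].
Proof.
move=> /allP H i j Hij.
have Hi : i \in iota 0 (size w) by rewrite mem_iota; lia.
move: (H i Hi) => /allP H2.
have Hj : j \in iota i (size w - i) by rewrite mem_iota; lia.
move: (H2 j Hj) => /hasP [p]; rewrite mem_iota => Hp /andP [/eqP E /hasP [s Hs /andP [H3 H4]]].
exists p, (p + (j - i)); split => //; first by lia.
have Hs' : s < size w by lia.
by exists (Ordinal Hs'); rewrite ?inE //; apply/andP.
Qed.

Lemma att_attb (w : seq nat) (S : {set 'I_(size w)}) l :
  string_attractor S -> {subset map val (enum S) <= l} -> attb w l.
Proof.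
move=> H Hsub; apply/allP => i; rewrite mem_iota => Hi.
apply/allP => j; rewrite mem_iota => Hj.
have Hj' : j < size w.
  by move: Hj => /andP [_]; rewrite subnKC //; case/andP: Hi => _; exact: ltnW.
have Hij : i <= j by case/andP: Hj.
clear Hi Hj.
have [p [q [Hpq E [s Hs Hs2]]]] := H i j ltac:(lia).
have Eq : q - p = j - i.
  case/andP: Hpq => Hp Hq.
  have := size_factor Hp Hq; rewrite E size_factor //; lia.
apply/hasP; exists p; first by rewrite mem_iota; lia.
have -> : p + (j - i) = q by lia.
rewrite E eqxx /=; apply/hasP; exists (val s).
  by apply: Hsub; apply: map_f; rewrite mem_enum.
exact: Hs2.
Qed.

Definition lists (m n : nat) : seq (seq nat) :=
  iter m (fun L => [seq x :: y | x <- iota 0 n, y <- L]) [:: [::]].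

Lemma mem_lists m n (l : seq nat) : size l = m -> all (fun x => x < n) l -> l \in lists m n.
Proof.
elim: m l => [|m IH] [|x l] //= [Hs] /andP [Hx Hl].
apply: allpairs_f; first by rewrite mem_iota.
exact: IH.
Qed.

Lemma lower_bf (w : seq nat) m : 0 < size w ->
  all (fun l => ~~ attb w l) (lists m (size w)) ->
  forall S : {set 'I_(size w)}, string_attractor S -> m < #|S|.
Proof.
move=> Hw /allP H S HS; rewrite ltnNge; apply/negP => Hle.
set l := map val (enum S) ++ nseq (m - #|S|) 0.
have Hl : l \in lists m (size w).
  apply: mem_lists; first by rewrite size_cat size_map size_nseq -cardE; apply: subnKC.
  rewrite all_cat; apply/andP; split.
    by apply/allP => y /mapP [x _ ->]; apply: ltn_ord.
  by apply/allP => y; rewrite mem_nseq => /andP [_ /eqP ->].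
have := H l Hl; rewrite (att_attb HS) //.
by move=> y Hy; rewrite mem_cat Hy.
Qed.

Definition Fs := undup [seq mkseq (fun d => v (i + d)) 3 | i <- iota 0 12].

Lemma size_Fs : size Fs = 10.
Proof. by vm_compute. Qed.

Lemma lower_count n : 14 <= n ->
  forall S : {set 'I_(size (vtm_prefix n))}, string_attractor S -> 4 <= #|S|.
Proof.
move=> Hn S HS.
set w := vtm_prefix n in S HS *.
have Hw : size w = n by rewrite size_mkseq.
pose P := setX S [set: 'I_3].
pose g (x : 'I_(size w) * 'I_3) := factor w (x.1 - x.2) (x.1 - x.2 + 2).
have Hsub : {subset Fs <= map g (enum P)}.
  move=> F; rewrite mem_undup => /mapP [i]; rewrite mem_iota => Hi ->.
  have EF : factor w i (i + 2) = mkseq (fun d => v (i + d)) 3.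
    rewrite /w vtm_prefix_v factor_mkseq; try lia.
    by have -> : (i + 2 - i).+1 = 3 by lia.
  have [p [q [Hpq E [s Hs Hs2]]]] := HS i (i + 2) ltac:(lia).
  case/andP: Hpq => Hp Hq.
  have Eq : q = p + 2.
    have := size_factor Hp Hq; rewrite E size_factor; lia.
  have Hd : (s : nat) - p < 3 by case/andP: Hs2; lia.
  rewrite -EF -E; apply/mapP; exists (s, Ordinal Hd).
    by rewrite mem_enum in_setX Hs in_setT.
  rewrite /g /=.
  have -> : (s : nat) - ((s : nat) - p) = p by case/andP: Hs2; lia.
  by rewrite Eq.
have := uniq_leq_size (undup_uniq _) Hsub.
rewrite -/Fs size_Fs size_map -cardE cardsX cardsT card_ord.
change (9 < #|S| * 3 -> 3 < #|S|); lia.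
Qed.

Lemma sas_of (w : seq nat) k :
  (exists S : {set 'I_(size w)}, string_attractor S /\ #|S| <= k) ->
  (forall S : {set 'I_(size w)}, string_attractor S -> k <= #|S|) ->
  smallest_attractor_size w k.
Proof.
move=> [S [HS Hk]] H; split => //.
by exists S; split => //; apply/eqP; rewrite eqn_leq Hk H.
Qed.

Lemma small_case n k l : 0 < n -> 0 < k -> size l <= k ->
  attb (mkseq v n) l ->
  all (fun l => ~~ attb (mkseq v n) l) (lists k.-1 n) ->
  smallest_attractor_size (vtm_prefix n) k.
Proof.
move=> Hn Hk Hl Ha Hb; rewrite vtm_prefix_v; apply: sas_of.
  exists [set x : 'I_(size (mkseq v n)) | val x \in l]; split; first exact: attb_att.
  exact: leq_trans (card_le _ _) Hl.
move=> S HS.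
have Hb' : all (fun l => ~~ attb (mkseq v n) l) (lists k.-1 (size (mkseq v n))).
  by rewrite size_mkseq.
have Hn' : 0 < size (mkseq v n) by rewrite size_mkseq.
have := lower_bf Hn' Hb' HS; lia.
Qed.

Unset Implicit Arguments.

Theorem theorem7 (n : nat) : 1 <= n ->
  smallest_attractor_size (vtm_prefix n)
    (if n == 1 then 1 else if n == 2 then 2 else if n <= 6 then 3 else 4).
Proof.
move=> Hn.
case: (ltnP n 14) => Hn14.
  case: n Hn Hn14 => [//|[|[|[|[|[|[|[|[|[|[|[|[|[|n]]]]]]]]]]]]]] _ Hn14.
  - by apply: (@small_case 1 1 [:: 0]) => //; vm_compute.
  - by apply: (@small_case 2 2 [:: 0; 1]) => //; vm_compute.
  - by apply: (@small_case 3 3 [:: 0; 1; 2]) => //; vm_compute.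
  - by apply: (@small_case 4 3 [:: 0; 1; 2]) => //; vm_compute.
  - by apply: (@small_case 5 3 [:: 1; 2; 3]) => //; vm_compute.
  - by apply: (@small_case 6 3 [:: 1; 3; 4]) => //; vm_compute.
  - by apply: (@small_case 7 4 [:: 0; 2; 3; 5]) => //; vm_compute.
  - by apply: (@small_case 8 4 [:: 0; 2; 3; 5]) => //; vm_compute.
  - by apply: (@small_case 9 4 [:: 0; 2; 3; 5]) => //; vm_compute.
  - by apply: (@small_case 10 4 [:: 0; 3; 5; 8]) => //; vm_compute.
  - by apply: (@small_case 11 4 [:: 0; 3; 5; 8]) => //; vm_compute.
  - by apply: (@small_case 12 4 [:: 2; 3; 6; 9]) => //; vm_compute.
  - by apply: (@small_case 13 4 [:: 2; 4; 7; 10]) => //; vm_compute.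
  - by [].
have -> : (if n == 1 then 1 else if n == 2 then 2 else if n <= 6 then 3 else 4) = 4.
  case: ifP => [/eqP ?|_]; first lia.
  case: ifP => [/eqP ?|_]; first lia.
  by case: ifP => [?|_] //; lia.
apply: sas_of; last exact: lower_count.
have [S [HS HI]] := upper_big (N := n) ltac:(lia).
exists [set x : 'I_(size (vtm_prefix n)) | val x \in S]; split; first exact: inv_att.
by rewrite -HS; apply: card_le.
Qed.
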